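(* Let $\mathcal{C}\subseteq\mathbb{R}^n$ be a nonempty closed convex set, $\theta^*\in\mathbb{R}^n$, $Z$ a random vector with $\mathbb{E}Z=0$ and $\mathbb{E}\|Z\|^2<\infty$, and for $\sigma>0$ let $Y=\theta^*+\sigma Z$ and $\hat\theta(Y)=\Pi_{\mathcal{C}}(Y)$. Suppose $$\sup_{x\in\mathbb{R}^n}\Big(\|\Pi_{F_{\mathcal{C}}(\Pi_{\mathcal{C}}(\theta^* ))}(x)\|^2-\|\Pi_{K_{\mathcal{C}}}(x)\|^2\Big)<\infty.$$ Then $$\lim_{\sigma\to\infty}\frac{1}{\sigma^2}M(\hat\theta,\theta^* )=\lim_{\sigma\to\infty}\frac{1}{\sigma^2}E(\hat\theta,\theta^* )=\delta(K_{\mathcal{C}}).$$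
   Context: $\Pi_S$ is Euclidean projection onto a closed convex set $S$. For $\theta_0\in\mathcal{C}$, $F_{\mathcal{C}}(\theta_0)=\{\theta-\theta_0:\theta\in\mathcal{C}\}$ and $T_{\mathcal{C}}(\theta_0)=\mathrm{cl}\{\alpha(\theta-\theta_0):\alpha\ge0,\theta\in\mathcal{C}\}$. The core cone is $K_{\mathcal{C}}=\bigcap_{\theta\in\mathcal{C}}T_{\mathcal{C}}(\theta)$. Misspecified risk: $M(\hat\theta,\theta^* )=\mathbb{E}\|\hat\theta(Y)-\Pi_{\mathcal{C}}(\theta^* )\|^2$; excess risk: $E(\hat\theta,\theta^* )=\mathbb{E}\|\hat\theta(Y)-\theta^*\|^2-\|\Pi_{\mathcal{C}}(\theta^* )-\theta^*\|^2$. For a closed convex cone $T$, $\delta(T)=\mathbb{E}\|\Pi_T(Z)\|^2$ (expectation over the distribution of $Z$). *)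

(* Defs.v *)
From HB Require Import structures.
From mathcomp Require Import all_boot all_order all_algebra.
From mathcomp Require Import all_classical all_reals all_analysis.
Set Implicit Arguments. Unset Strict Implicit. Unset Printing Implicit Defensive.
Import Order.TTheory GRing.Theory Num.Theory.
Import numFieldNormedType.Exports.
Local Open Scope classical_set_scope.
Local Open Scope ring_scope.

Section Defs.
Variables (R : realType) (n : nat).
Implicit Types (S C : set 'rV[R]_n) (x y : 'rV[R]_n).

Definition sqnorm (x : 'rV[R]_n) : R := \sum_(i < n) x ord0 i ^+ 2.

Definition convex_set_rv C : Prop :=
  forall x y t, C x -> C y -> 0 <= t <= 1 -> C (t *: x + (1 - t) *: y).

Definition eproj S x : 'rV[R]_n :=
  xget 0 [set p | S p /\ forall q, S q -> sqnorm (x - p) <= sqnorm (x - q)].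

Definition feas_dir C (t0 : 'rV[R]_n) : set 'rV[R]_n :=
  [set th - t0 | th in C].

Definition tangent_cone C (t0 : 'rV[R]_n) : set 'rV[R]_n :=
  closure [set v | exists a : R, exists th, 0 <= a /\ C th /\ v = a *: (th - t0)].

Definition core_cone C : set 'rV[R]_n :=
  [set v | forall th, C th -> tangent_cone C th v].

End Defs.

(* Main.v *)
Require Import Defs.
From HB Require Import structures.
From mathcomp Require Import all_boot all_order all_algebra.
From mathcomp Require Import all_classical all_reals all_analysis.
From mathcomp Require Import ring lra.
From mathcomp Require Import measurable_realfun.
Import Order.TTheory GRing.Theory Num.Theory.
Import numFieldNormedType.Exports.
Local Open Scope classical_set_scope.
Local Open Scope ring_scope.

Set Implicit Arguments. Unset Strict Implicit. Unset Printing Implicit Defensive.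

Section VecAlg.
Variables (R : realType) (n : nat).
Implicit Types (x y z : 'rV[R]_n) (a b : R).

Definition dot x y : R := \sum_(i < n) x ord0 i * y ord0 i.

Lemma sqnormE x : sqnorm x = dot x x.
Proof. by rewrite /sqnorm /dot; apply: eq_bigr => i _; rewrite expr2. Qed.

Lemma dotC x y : dot x y = dot y x.
Proof. by apply: eq_bigr => i _; rewrite mulrC. Qed.

Lemma dotDl x y z : dot (x + y) z = dot x z + dot y z.
Proof. by rewrite /dot -big_split; apply: eq_bigr => i _; rewrite !mxE mulrDl. Qed.

Lemma dotDr x y z : dot z (x + y) = dot z x + dot z y.
Proof. by rewrite dotC dotDl !(dotC z). Qed.

Lemma dotZl a x y : dot (a *: x) y = a * dot x y.
Proof. by rewrite /dot mulr_sumr; apply: eq_bigr => i _; rewrite !mxE mulrA. Qed.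

Lemma dotZr a x y : dot x (a *: y) = a * dot x y.
Proof. by rewrite dotC dotZl dotC. Qed.

Lemma dotNl x y : dot (- x) y = - dot x y.
Proof. by rewrite -scaleN1r dotZl mulN1r. Qed.

Lemma dotNr x y : dot x (- y) = - dot x y.
Proof. by rewrite dotC dotNl dotC. Qed.

Lemma dotBl x y z : dot (x - y) z = dot x z - dot y z.
Proof. by rewrite dotDl dotNl. Qed.

Lemma dotBr x y z : dot z (x - y) = dot z x - dot z y.
Proof. by rewrite dotDr dotNr. Qed.

Lemma dot0l x : dot 0 x = 0.
Proof. by rewrite /dot big1 // => i _; rewrite mxE mul0r. Qed.

Lemma dot0r x : dot x 0 = 0.
Proof. by rewrite dotC dot0l. Qed.

Lemma sqnorm_ge0 x : 0 <= sqnorm x.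
Proof. by rewrite /sqnorm; apply: sumr_ge0 => i _; exact: sqr_ge0. Qed.

Lemma sqnorm_eq0 x : sqnorm x = 0 -> x = 0.
Proof.
move=> h; apply/rowP => i; rewrite mxE.
have := psumr_eq0P (fun i _ => sqr_ge0 (x ord0 i)) h (i := i) isT.
by move/eqP; rewrite sqrf_eq0 => /eqP.
Qed.

Lemma sqnorm0 : sqnorm (0 : 'rV[R]_n) = 0.
Proof. by rewrite sqnormE dot0l. Qed.

Lemma sqnormD x y : sqnorm (x + y) = sqnorm x + 2 * dot x y + sqnorm y.
Proof. rewrite !sqnormE dotDl !dotDr (dotC y x); ring. Qed.

Lemma sqnormB x y : sqnorm (x - y) = sqnorm x - 2 * dot x y + sqnorm y.
Proof. rewrite !sqnormE dotBl !dotBr (dotC y x); ring. Qed.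

Lemma sqnormZ a x : sqnorm (a *: x) = a ^+ 2 * sqnorm x.
Proof. rewrite !sqnormE dotZl dotZr; ring. Qed.

Lemma sqnormN x : sqnorm (- x) = sqnorm x.
Proof. by rewrite !sqnormE dotNl dotNr opprK. Qed.

Lemma sqnormBC x y : sqnorm (x - y) = sqnorm (y - x).
Proof. by rewrite -sqnormN opprB. Qed.

Lemma young d x y : 0 < d -> 2 * dot x y <= d * sqnorm x + sqnorm y / d.
Proof.
move=> d0; have := sqnorm_ge0 (d *: x - y).
rewrite sqnormB sqnormZ dotZl => h.
have e : d * sqnorm x + sqnorm y / d - 2 * dot x y =
    (d ^+ 2 * sqnorm x - 2 * (d * dot x y) + sqnorm y) / d.
  by field; rewrite gt_eqF.
rewrite -subr_ge0 e; apply: divr_ge0 => //; exact: ltW.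
Qed.

Definition nrm x : R := Num.sqrt (sqnorm x).

Lemma nrm_ge0 x : 0 <= nrm x.
Proof. exact: sqrtr_ge0. Qed.

Lemma nrm_sq x : nrm x ^+ 2 = sqnorm x.
Proof. by rewrite sqr_sqrtr // sqnorm_ge0. Qed.

Lemma nrm_le x y : (nrm x <= nrm y) = (sqnorm x <= sqnorm y).
Proof. by rewrite /nrm ler_sqrt // sqnorm_ge0. Qed.

Lemma CS x y : dot x y <= nrm x * nrm y.
Proof.
have [x0|xn0] := eqVneq (nrm x) 0.
  have : sqnorm x = 0 by rewrite -nrm_sq x0 expr0n.
  by move/sqnorm_eq0 => e; rewrite e dot0l mulr_ge0 // nrm_ge0.
have [y0|yn0] := eqVneq (nrm y) 0.
  have : sqnorm y = 0 by rewrite -nrm_sq y0 expr0n.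
  by move/sqnorm_eq0 => e; rewrite e dot0r mulr_ge0 // nrm_ge0.
have xp : 0 < nrm x by rewrite lt_neqAle eq_sym xn0 nrm_ge0.
have yp : 0 < nrm y by rewrite lt_neqAle eq_sym yn0 nrm_ge0.
have := young x y (divr_gt0 yp xp).
rewrite -!nrm_sq => h.
have e1 : nrm y / nrm x * nrm x ^+ 2 = nrm x * nrm y.
  by field; rewrite gt_eqF.
have e2 : nrm y ^+ 2 / (nrm y / nrm x) = nrm x * nrm y.
  by field; rewrite !gt_eqF.
rewrite e1 e2 in h; lra.
Qed.

Lemma CSabs x y : `|dot x y| <= nrm x * nrm y.
Proof.
rewrite ler_norml CS andbT -[X in _ <= X]opprK lerN2 -dotNr.
apply: le_trans (CS _ _) _.
by rewrite /nrm sqnormN.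
Qed.

Lemma nrm_leP x a : 0 <= a -> sqnorm x <= a ^+ 2 -> nrm x <= a.
Proof.
move=> a0 h; rewrite -(ger0_norm a0) -sqrtr_sqr /nrm ler_sqrt //.
exact: sqr_ge0.
Qed.

Lemma nrmD x y : nrm (x + y) <= nrm x + nrm y.
Proof.
apply: nrm_leP; first by rewrite addr_ge0 ?nrm_ge0.
rewrite sqnormD -!nrm_sq; have := CS x y; nra.
Qed.

Lemma nrmB_ge x y : nrm x - nrm y <= nrm (x - y).
Proof. have := nrmD (x - y) y; rewrite subrK; lra. Qed.

Lemma nrmBC x y : nrm (x - y) = nrm (y - x).
Proof. by rewrite /nrm sqnormBC. Qed.

Lemma nrm_lip x y : `|nrm x - nrm y| <= nrm (x - y).
Proof.
rewrite ler_norml nrmB_ge andbT; have := nrmB_ge y x; rewrite nrmBC; lra.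
Qed.

Lemma nrmZ a x : nrm (a *: x) = `|a| * nrm x.
Proof. by rewrite /nrm sqnormZ sqrtrM ?sqr_ge0 // sqrtr_sqr. Qed.

End VecAlg.


Section Proj.
Variables (R : realType) (n : nat).
Implicit Types (x y z q : 'rV[R]_n) (a b : R) (S : set 'rV[R]_n).

Lemma cont_sum (F : 'I_n -> 'rV[R]_n -> R) :
  (forall i, continuous (F i)) -> continuous (fun q => \sum_i F i q).
Proof.
move=> cF; rewrite /continuous_at.
have : forall r : seq 'I_n, continuous (fun q => \sum_(i <- r) F i q).
  elim=> [|a r IH].
    have -> : (fun q => \sum_(i <- [::]) F i q) = fun=> 0.
      by apply: funext => q; rewrite big_nil.
    exact: cst_continuous.
  have -> : (fun q => \sum_(i <- a :: r) F i q) =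
      (F a + (fun q => \sum_(i <- r) F i q)).
    by apply: funext => q; rewrite big_cons.
  by move=> q; apply: continuousD; [exact: cF | exact: IH].
by move=> h; exact: h.
Qed.

Lemma sqnorm_continuous : continuous (@sqnorm R n).
Proof.
rewrite /sqnorm; apply: cont_sum => i q.
apply: continuousM; exact: coord_continuous.
Qed.

Lemma sqnormB_continuous x : continuous (fun q => sqnorm (x - q)).
Proof.
move=> q; apply: (continuous_comp (f := fun q => x - q)); last exact: sqnorm_continuous.
apply: continuousB; first exact: cst_continuous.
exact: cvg_id.
Qed.

Lemma coord_le_nrm (v : 'rV[R]_n) i : `|v ord0 i| <= nrm v.
Proof.
rewrite -sqrtr_sqr /nrm ler_sqrt ?sqnorm_ge0 // /sqnorm (bigD1 i) //=.
by rewrite lerDl sumr_ge0 // => j _; exact: sqr_ge0.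
Qed.

Lemma mxnorm_le_nrm (v : 'rV[R]_n) : `|v| <= nrm v.
Proof.
rewrite [leLHS]/Num.Def.normr /= mx_normrE; apply: bigmax_le; first exact: nrm_ge0.
by move=> [i j] _ /=; rewrite (ord1 i); exact: coord_le_nrm.
Qed.

Lemma proj_exists S x : S !=set0 -> closed S ->
  exists p, S p /\ forall q, S q -> sqnorm (x - p) <= sqnorm (x - q).
Proof.
move=> [s0 Ss0] cS.
pose A := S `&` [set q | sqnorm (x - q) <= sqnorm (x - s0)].
have A0 : A !=set0 by exists s0; split => //=.
have cA : closed A.
  apply: closedI => //.
  have -> : [set q | sqnorm (x - q) <= sqnorm (x - s0)] =
    (fun q => sqnorm (x - q)) @^-1` [set r | r <= sqnorm (x - s0)] by [].
  apply: preimage_closed; last exact: closed_le.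
  by move=> q _; exact: sqnormB_continuous.
have bA : [bounded q | q in A].
  rewrite /bounded_near; near=> M; move=> q [_ /= Aq].
  have hM : nrm x + nrm (x - s0) <= M.
    by near: M; apply: nbhs_pinfty_ge; rewrite num_real.
  apply: le_trans (mxnorm_le_nrm q) _; apply: le_trans hM.
  have -> : q = x + (q - x) by rewrite addrCA subrr addr0.
  by apply: le_trans (nrmD _ _) _; rewrite lerD2l (nrmBC q) nrm_le.
have cpA : compact A by exact: bounded_closed_compact.
have [p pA pmin] := EVT_min_rV A0 cpA
  (continuous_subspaceT (sqnormB_continuous (x:=x))).
move: pA; rewrite inE => -[Sp Ap]; exists p; split => // q Sq.
have [qs0|qs0] := leP (sqnorm (x - q)) (sqnorm (x - s0)).
  by apply: pmin; rewrite inE.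
by apply: le_trans Ap (ltW qs0).
Unshelve. all: by end_near.
Qed.


Lemma min_ray (D N : R) : 0 <= N ->
  (forall t, 0 <= t -> - (2 * D) + N <= - (2 * t * D) + t ^+ 2 * N) -> D = N.
Proof.
move=> N0 h.
have h0 := h 0 (lexx _).
have N1 : N + 1 != 0 by rewrite lt0r_neq0 //; lra.
apply/eqP; rewrite eq_le; apply/andP; split; rewrite leNgt; apply/negP => hlt.
- pose t := 1 + (2 * D - 2 * N) / (N + 1).
  have e : t * (N + 1) = N + 1 + (2 * D - 2 * N) by rewrite /t; field.
  have t0 : 1 <= t by rewrite /t lerDl divr_ge0 //; lra.
  have tp : 0 < t - 1 by rewrite /t addrAC subrr add0r divr_gt0 //; lra.
  have h1 : (t - 1) * (2 * D - (t + 1) * N) <= 0.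
    have := h t (le_trans ler01 t0).
    have -> : (t - 1) * (2 * D - (t + 1) * N) = (- (2 * D) + N) - (- (2 * t * D) + t ^+ 2 * N) by ring.
    lra.
  have h2 : 2 * D - (t + 1) * N <= 0 by rewrite -(pmulr_rle0 _ tp).
  lra.
- pose t := 1 - (N - D) / (N + 1).
  have e : t * (N + 1) = N + 1 - (N - D) by rewrite /t; field.
  have t0 : t <= 1 by rewrite /t lerBlDr lerDl divr_ge0 //; lra.
  have t1 : 0 <= t.
    rewrite /t subr_ge0 ler_pdivrMr; last lra.
    lra.
  have tp : 0 < 1 - t by rewrite /t opprB addrCA subrr addr0 divr_gt0 //; lra.
  have h1 : (1 - t) * ((t + 1) * N - 2 * D) <= 0.
    have := h t t1.
    have -> : (1 - t) * ((t + 1) * N - 2 * D) = (- (2 * D) + N) - (- (2 * t * D) + t ^+ 2 * N) by ring.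
    lra.
  have h2 : (t + 1) * N - 2 * D <= 0 by rewrite -(pmulr_rle0 _ tp).
  nra.
Qed.

Lemma eprojP S x : S !=set0 -> closed S ->
  S (eproj S x) /\ forall q, S q -> sqnorm (x - eproj S x) <= sqnorm (x - q).
Proof.
move=> S0 cS; 
exact: (xgetPex 0 (proj_exists x S0 cS)).
Qed.

Lemma convex_comb S c p t : convex_set_rv S -> S c -> S p -> 0 <= t <= 1 ->
  S (p + t *: (c - p)).
Proof.
move=> cvx Sc Sp t01; have := cvx c p t Sc Sp t01.
have -> // : t *: c + (1 - t) *: p = p + t *: (c - p).
by apply/rowP => i; rewrite !mxE; ring.
Qed.

Lemma min_vi S x p : convex_set_rv S -> S p ->
  (forall q, S q -> sqnorm (x - p) <= sqnorm (x - q)) ->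
  forall c, S c -> dot (x - p) (c - p) <= 0.
Proof.
move=> cvx Sp pmin c Sc.
set D := dot (x - p) (c - p); set N := sqnorm (c - p).
have key : forall t, 0 < t <= 1 -> 2 * t * D <= t ^+ 2 * N.
  move=> t /andP [t0 t1].
  have := pmin _ (convex_comb cvx Sc Sp (t:=t) _).
  rewrite ltW ?t0 ?t1 // => /(_ isT).
  have -> : x - (p + t *: (c - p)) = (x - p) - t *: (c - p).
    by apply/rowP => i; rewrite !mxE; ring.
  rewrite [sqnorm (x - p - _)]sqnormB dotZr sqnormZ -/D -/N; lra.
rewrite leNgt; apply/negP => Dp.
have N0 : 0 <= N by exact: sqnorm_ge0.
pose t := D / (D + N).
have DN : 0 < D + N by lra.
have et : t * (D + N) = D by rewrite /t divfK // gt_eqF.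
have t0 : 0 < t by rewrite divr_gt0.
have t1 : t <= 1 by rewrite ler_pdivrMr // mul1r; lra.
have := key t; rewrite t0 t1 => /(_ isT) => h.
have h2 : t * (2 * D - t * N) <= 0.
  have -> : t * (2 * D - t * N) = 2 * t * D - t ^+ 2 * N by ring.
  lra.
have h3 : 2 * D - t * N <= 0 by rewrite -(pmulr_rle0 _ t0).
nra.
Qed.

Lemma min_unique S x p1 p2 : convex_set_rv S -> S p1 -> S p2 ->
  (forall q, S q -> sqnorm (x - p1) <= sqnorm (x - q)) ->
  (forall q, S q -> sqnorm (x - p2) <= sqnorm (x - q)) -> p1 = p2.
Proof.
move=> cvx S1 S2 m1 m2.
have h1 := min_vi cvx S1 m1 S2.
have h2 := min_vi cvx S2 m2 S1.
have : sqnorm (p2 - p1) <= 0.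
  have -> : sqnorm (p2 - p1) = dot (x - p1) (p2 - p1) + dot (x - p2) (p1 - p2).
    rewrite sqnormE !dotBl !dotBr (dotC p1 p2) (dotC x p1) (dotC x p2) (dotC p2 x) (dotC p1 x); ring.
  lra.
move=> h; have : sqnorm (p2 - p1) = 0 by apply/eqP; rewrite eq_le h sqnorm_ge0.
by move/sqnorm_eq0/eqP; rewrite subr_eq0 => /eqP.
Qed.

Lemma eproj_unique S x p : convex_set_rv S -> S !=set0 -> closed S -> S p ->
  (forall q, S q -> sqnorm (x - p) <= sqnorm (x - q)) -> eproj S x = p.
Proof.
move=> cvx S0 cS Sp pm; have [Se em] := eprojP x S0 cS.
exact: (min_unique cvx Se Sp em pm).
Qed.

Lemma eproj_vi S x c : convex_set_rv S -> S !=set0 -> closed S -> S c ->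
  dot (x - eproj S x) (c - eproj S x) <= 0.
Proof.
move=> cvx S0 cS Sc; have [Se em] := eprojP x S0 cS; exact: (min_vi cvx Se em Sc).
Qed.

Lemma eproj_nonexp S x y : convex_set_rv S -> S !=set0 -> closed S ->
  sqnorm (eproj S x - eproj S y) <= sqnorm (x - y).
Proof.
move=> cvx S0 cS.
have [Sp _] := eprojP x S0 cS; have [Sq _] := eprojP y S0 cS.
have h1 := eproj_vi x cvx S0 cS Sq.
have h2 := eproj_vi y cvx S0 cS Sp.
set p := eproj S x in h1 h2 *; set q := eproj S y in h1 h2 *.
have e : sqnorm (p - q) = dot (x - y) (p - q) + dot (x - p) (q - p) + dot (y - q) (p - q).
  rewrite sqnormE !dotBl !dotBr (dotC q p) (dotC x q) (dotC y p) (dotC x p) (dotC y q); ring.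
have := young (x - y) (p - q) ltr01.
rewrite invr1 mulr1 mul1r => hy.
lra.
Qed.

End Proj.


Section Cone.
Variables (R : realType) (n : nat).
Implicit Types (x y z v w q : 'rV[R]_n) (a b t : R) (S C : set 'rV[R]_n).

Lemma dot_continuous w : continuous (fun v => dot w v).
Proof.
rewrite /dot; apply: cont_sum => i q.
apply: continuousM; [exact: cst_continuous | exact: coord_continuous].
Qed.

Lemma closure_sub_closed (A B : set 'rV[R]_n) : closed B -> A `<=` B -> closure A `<=` B.
Proof. by move=> cB AB; apply: subset_trans cB; exact: closureS. Qed.

Lemma tangent_vi C x v : convex_set_rv C -> C !=set0 -> closed C ->
  tangent_cone C (eproj C x) v -> dot (x - eproj C x) v <= 0.
Proof.
move=> cvx C0 cC; set p := eproj C x.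
have cB : closed [set u | dot (x - p) u <= 0].
  have -> : [set u | dot (x - p) u <= 0] = (fun u => dot (x - p) u) @^-1` [set r | r <= 0] by [].
  apply: preimage_closed; last exact: closed_le.
  by move=> u _; exact: dot_continuous.
move=> hv; apply: (closure_sub_closed cB _ hv) => u [a [th [a0 [Cth ->]]]] /=.
rewrite dotZr; apply: mulr_ge0_le0 => //.
exact: eproj_vi.
Qed.

Lemma core_vi C x v : convex_set_rv C -> C !=set0 -> closed C ->
  core_cone C v -> dot (x - eproj C x) v <= 0.
Proof.
move=> cvx C0 cC Kv; apply: tangent_vi => //; apply: Kv.
by have [] := eprojP x C0 cC.
Qed.

Lemma core0 C : core_cone C 0.
Proof.
move=> th Cth; apply: subset_closure; exists 0, th; split => //; split => //.
by rewrite scale0r.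
Qed.

Lemma core_scale C t v : 0 <= t -> core_cone C v -> core_cone C (t *: v).
Proof.
move=> t0 Kv th Cth.
have [->|tn0] := eqVneq t 0; first by rewrite scale0r; exact: core0.
have tp : 0 < t by rewrite lt_neqAle eq_sym tn0 t0.
set A := [set u | exists a, exists th0, 0 <= a /\ C th0 /\ u = a *: (th0 - th)].
have cB : closed [set u | tangent_cone C th (t *: u)].
  have -> : [set u | tangent_cone C th (t *: u)] = (fun u => t *: u) @^-1` (tangent_cone C th) by [].
  apply: preimage_closed; last exact: closed_closure.
  by move=> u _; apply: continuousZ; [exact: cst_continuous | exact: cvg_id].
have : A `<=` [set u | tangent_cone C th (t *: u)].
  move=> u [a [th0 [a0 [Cth0 ->]]]] /=; apply: subset_closure.
  by exists (t * a), th0; split; [exact: mulr_ge0|split => //; rewrite scalerA].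
by move/(closure_sub_closed cB); apply; exact: Kv.
Qed.

Lemma core_closed C : closed (core_cone C).
Proof.
have -> : core_cone C = \bigcap_(th in C) tangent_cone C th.
  by apply/seteqP; split => v /= h th Cth; exact: h.
by apply: closed_bigI => th _; exact: closed_closure.
Qed.

Lemma core_nonempty C : core_cone C !=set0.
Proof. by exists 0; exact: core0. Qed.

Lemma feas_dirE C p : feas_dir C p = [set v | C (v + p)].
Proof.
apply/seteqP; split => v /=.
  by move=> [th Cth <-]; rewrite subrK.
by move=> h; exists (v + p) => //; rewrite addrK.
Qed.

Lemma feas_closed C p : closed C -> closed (feas_dir C p).
Proof.
move=> cC; rewrite feas_dirE.
have -> : [set v | C (v + p)] = (fun v => v + p) @^-1` C by [].
apply: preimage_closed => // u _.
by apply: continuousD; [exact: cvg_id | exact: cst_continuous].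
Qed.

Lemma feas_nonempty C p : C !=set0 -> feas_dir C p !=set0.
Proof. by move=> [c Cc]; exists (c - p); exists c. Qed.

Lemma eproj_feas C p y : convex_set_rv C -> C !=set0 -> closed C ->
  eproj (feas_dir C p) y = eproj C (y + p) - p.
Proof.
move=> cvx C0 cC.
have [[c Cc <-] dm] := eprojP y (feas_nonempty p C0) (@feas_closed C p cC).
congr (_ - _); apply/esym/eproj_unique => // q Cq.
have := dm (q - p); rewrite /=.
have -> : y - (c - p) = y + p - c by apply/rowP => i; rewrite !mxE; ring.
have -> : y - (q - p) = y + p - q by apply/rowP => i; rewrite !mxE; ring.
by apply; exists q.
Qed.

End Cone.


Section ConeProj.
Variables (R : realType) (n : nat) (K : set 'rV[R]_n).
Hypotheses (cK : closed K) (K0 : K 0)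
  (Kc : forall t v, 0 <= t -> K v -> K (t *: v)).
Implicit Types (x y z v w q : 'rV[R]_n) (a b t : R).

Let KN : K !=set0. Proof. by exists 0. Qed.

Lemma cone_in z : K (eproj K z).
Proof. by have [] := eprojP z KN cK. Qed.

Lemma cone_min z q : K q -> sqnorm (z - eproj K z) <= sqnorm (z - q).
Proof. by have [_] := eprojP z KN cK; apply. Qed.

Lemma cone_orth z : dot z (eproj K z) = sqnorm (eproj K z).
Proof.
apply: min_ray; first exact: sqnorm_ge0.
move=> t t0; have := cone_min z (Kc t0 (cone_in z)).
rewrite !sqnormB dotZr sqnormZ mulrA; lra.
Qed.

Lemma cone_max z k : K k -> 2 * dot z k - sqnorm k <= sqnorm (eproj K z).
Proof.
move=> Kk; have := cone_min z Kk; rewrite !sqnormB cone_orth; lra.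
Qed.

Lemma cone_le z : sqnorm (eproj K z) <= sqnorm z.
Proof.
have := sqnorm_ge0 (z - eproj K z); rewrite sqnormB cone_orth; lra.
Qed.

Lemma cone_lip z z' : nrm (eproj K z) - nrm (eproj K z') <= nrm (z - z').
Proof.
set k := eproj K z; set r := nrm k; set d := nrm (z - z').
have r0 : 0 <= r by exact: nrm_ge0.
have d0 : 0 <= d by exact: nrm_ge0.
have m0 : 0 <= nrm (eproj K z') by exact: nrm_ge0.
have [rd|rd] := leP r d; first lra.
have rp : 0 < r by lra.
pose t := (r - d) / r.
have tr : t * r = r - d by rewrite /t divfK // gt_eqF.
have t0 : 0 <= t by rewrite /t divr_ge0 //; lra.
have h := cone_max z' (Kc t0 (cone_in z)).
rewrite dotZr sqnormZ -nrm_sq -/k -/r in h.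
have hz : dot z k = r ^+ 2 by rewrite cone_orth /r nrm_sq.
have hd : `|dot (z - z') k| <= d * r by exact: CSabs.
rewrite dotBl hz in hd.
have e1 : dot z' k >= r ^+ 2 - d * r.
  move: hd; rewrite ler_norml => /andP [h1 h2]; lra.
have a1 : t * (r ^+ 2 - d * r) <= t * dot z' k by rewrite ler_wpM2l.
have a2 : t * (r ^+ 2 - d * r) = (r - d) ^+ 2.
  have -> : t * (r ^+ 2 - d * r) = (t * r) * (r - d) by ring.
  by rewrite tr expr2.
have a3 : t ^+ 2 * r ^+ 2 = (r - d) ^+ 2 by rewrite -exprMn tr.
have h2 : (r - d) ^+ 2 <= nrm (eproj K z') ^+ 2.
  rewrite nrm_sq; move: h; rewrite a3 mulrA; lra.
nra.
Qed.

End ConeProj.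


Section Bounds.
Variables (R : realType) (n : nat) (C : set 'rV[R]_n) (theta : 'rV[R]_n).
Hypotheses (C0 : C !=set0) (cC : closed C) (cvx : convex_set_rv C).
Implicit Types (x y z v w q : 'rV[R]_n) (a b t s : R).

Local Notation K := (core_cone C).
Local Notation p := (eproj C theta).
Local Notation PK := (eproj K).

Let cK : closed K. Proof. exact: core_closed. Qed.
Let K0 : K 0. Proof. exact: core0. Qed.
Let Kc : forall t v, 0 <= t -> K v -> K (t *: v). Proof. by move=> t v; exact: core_scale. Qed.

Lemma young2 (u w : 'rV[R]_n) d : 0 < d -> `|2 * dot u w| <= d * sqnorm u + sqnorm w / d.
Proof.
move=> d0; rewrite ler_norml (young u w d0) andbT.
have := young u (- w) d0; rewrite dotNr sqnormN; lra.
Qed.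

Lemma bound_low z s d : 0 < s -> 0 < d ->
  s ^+ 2 * sqnorm (PK z) <=
  (1 + d) * sqnorm (eproj C (theta + s *: z) - p) + (1 + d^-1) * sqnorm (theta - p).
Proof.
move=> s0 d0.
set q := eproj C (theta + s *: z); set k := PK z.
have Kk : K k by exact: (cone_in cK K0)...
have vi := core_vi (theta + s *: z) cvx C0 cC Kk.
rewrite -/q in vi.
have g := cone_orth cK K0 Kc z; rewrite -/k in g.
have e1 : theta + s *: z - q = (theta - p) + s *: z - (q - p).
  by apply/rowP => i; rewrite !mxE; ring.
rewrite e1 dotBl dotDl dotZl g in vi.
have h0 := sqnorm_ge0 ((q - p) - (theta - p) - s *: k).
rewrite sqnormB dotZr sqnormZ dotBl in h0.
have hy := young2 (q - p) (theta - p) d0.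
have e2 : sqnorm (q - p - (theta - p)) = sqnorm (q - p) - 2 * dot (q - p) (theta - p) + sqnorm (theta - p)
  by rewrite sqnormB.
rewrite e2 in h0.
move: hy; rewrite ler_norml => /andP [hy1 hy2].
have e3 : sqnorm (theta - p) / d = d^-1 * sqnorm (theta - p) by rewrite mulrC.
rewrite e3 in hy1 hy2.
have hsk : s * (s * sqnorm k) <= s * dot (q - p) k - s * dot (theta - p) k.
  by rewrite -mulrBr ler_wpM2l ?(ltW s0) //; lra.
nra.
Qed.

Lemma bound_up z s d B : 0 < s -> 0 < d -> d <= 1 ->
  (forall x, sqnorm (eproj (feas_dir C p) x) - sqnorm (PK x) <= B) ->
  (1 - d) * (sqnorm (eproj C (theta + s *: z) - p) - B) <=
  s ^+ 2 * sqnorm (PK z) + d^-1 * sqnorm (theta - p).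
Proof.
move=> s0 d0 d1 hB.
set q := eproj C (theta + s *: z).
set y := (theta - p) + s *: z.
have hy : eproj (feas_dir C p) y = q - p.
  rewrite eproj_feas //; congr (eproj C _ - _).
  by apply/rowP => i; rewrite /y !mxE; ring.
have hB' := hB y; rewrite hy in hB'.
set k1 := PK y; set r := sqnorm k1.
have or1 : dot y k1 = r by exact: cone_orth.
rewrite /y dotDl dotZl in or1.
have si : 0 <= s^-1 by rewrite invr_ge0 ltW.
have hm := cone_max cK K0 Kc z (Kc si (cone_in cK K0 y)).
rewrite -/k1 dotZr sqnormZ -/r in hm.
have hm2 : 2 * s * dot z k1 - r <= s ^+ 2 * sqnorm (PK z).
  have e : 2 * s * dot z k1 - r = s ^+ 2 * (2 * (s^-1 * dot z k1) - s^-1 ^+ 2 * r).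
    by field; rewrite gt_eqF.
  by rewrite e ler_pM2l // exprn_gt0.
have hy2 := young k1 (theta - p) d0.
rewrite dotC -/r in hy2.
have e3 : sqnorm (theta - p) / d = d^-1 * sqnorm (theta - p) by rewrite mulrC.
rewrite e3 in hy2.
have hr : (1 - d) * r <= s ^+ 2 * sqnorm (PK z) + d^-1 * sqnorm (theta - p).
  have -> : (1 - d) * r = 2 * r - (d * r + r) by ring.
  lra.
apply: le_trans hr; rewrite ler_wpM2l //; first lra.
move: hB'; rewrite -/k1 -/r; lra.
Qed.

Lemma H_rel z s :
  sqnorm (eproj C (theta + s *: z) - theta) - sqnorm (p - theta) =
  sqnorm (eproj C (theta + s *: z) - p) - 2 * dot (eproj C (theta + s *: z) - p) (theta - p).
Proof.
have -> : eproj C (theta + s *: z) - theta = (eproj C (theta + s *: z) - p) - (theta - p).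
  by apply/rowP => i; rewrite !mxE; ring.
by rewrite sqnormB (sqnormBC p theta); ring.
Qed.

Lemma real_approx (X a h c m d B e : R) :
  0 <= X -> 0 <= a -> 0 <= c -> 0 < d -> d * m = 1 -> 8 * d <= e -> d <= 1/8 ->
  X <= (1 + d) * a + (1 + m) * c ->
  (1 - d) * (a - B) <= X + m * c ->
  `|h - a| <= d * a + m * c ->
  `|a - X| <= e * X + (2 * (`|B| + 4 * m * c + 4 * c) + m * c) /\
  `|h - X| <= e * X + (2 * (`|B| + 4 * m * c + 4 * c) + m * c).
Proof.
move=> X0 a0 c0 d0 dm de d8 hL hU hH.
have m0 : 0 < m by have := dm; nra.
have mc : 0 <= m * c by rewrite mulr_ge0 // ltW.
have B1 : B <= `|B| by exact: ler_norm.
have B2 : 0 <= `|B| by [].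
set Y := X + m * c.
have Y0 : 0 <= Y by rewrite /Y addr_ge0.
have s1 : a <= `|B| + (1 + 2 * d) * Y.
  have [aB|aB] := leP (a - B) 0.
    have : 0 <= (1 + 2 * d) * Y by rewrite mulr_ge0 //; lra.
    lra.
  have : (1 - d) * (a - B) <= (1 - d) * ((1 + 2 * d) * Y).
    apply: le_trans hU _; rewrite -/Y mulrA.
    have -> : (1 - d) * (1 + 2 * d) = 1 + d * (1 - 2 * d) by ring.
    rewrite mulrDl mul1r lerDl; apply: mulr_ge0 => //; apply: mulr_ge0; lra.
  rewrite ler_pM2l; last lra.
  lra.
have s1' : a <= `|B| + Y + 2 * d * X + 2 * (d * m) * c.
  move: s1; rewrite /Y; nra.
rewrite dm mulr1 in s1'.
have s2 : a - X <= 2 * d * X + `|B| + 2 * m * c + 2 * c.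
  move: s1'; rewrite /Y; lra.
have s3 : X - a <= 2 * d * X + `|B| + 4 * m * c + 4 * c.
  have hda : d * a <= d * (`|B| + Y + 2 * d * X + 2 * c) by apply: ler_wpM2l; [exact: ltW | lra].
  have dmc : d * (m * c) = c by rewrite mulrA dm mul1r.
  have : d * `|B| <= `|B| by nra.
  have : d * X <= X by nra.
  have : d * (2 * d * X) <= d * X by nra.
  have : d * (2 * c) <= 2 * c by nra.
  move: hda; rewrite /Y !mulrDr dmc.
  lra.
have ha : `|a - X| <= 2 * d * X + (`|B| + 4 * m * c + 4 * c).
  rewrite ler_norml; apply/andP; split; lra.
have dX : 0 <= d * X by rewrite mulr_ge0 // ltW.
have eX : 8 * d * X <= e * X by apply: ler_wpM2r.
split.
  apply: le_trans ha _; lra.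
have -> : h - X = (h - a) + (a - X) by ring.
apply: le_trans (ler_normD _ _) _.
have hda : d * a <= d * (X + 2 * d * X + (`|B| + 4 * m * c + 4 * c)).
  apply: ler_wpM2l; first exact: ltW.
  move: ha; rewrite ler_norml => /andP [_ ?]; lra.
have : d * (X + 2 * d * X + (`|B| + 4 * m * c + 4 * c)) <= 2 * d * X + (`|B| + 4 * m * c + 4 * c).
  have : d * (2 * d * X) <= d * X by nra.
  have : d * (`|B| + 4 * m * c + 4 * c) <= (`|B| + 4 * m * c + 4 * c).
    have KK0 : 0 <= `|B| + 4 * m * c + 4 * c by lra.
    have d1 : d <= 1 by lra.
    nra.
  rewrite !mulrDr; lra.
lra.
Qed.

Lemma approx_all B e :
  (forall x, sqnorm (eproj (feas_dir C p) x) - sqnorm (PK x) <= B) -> 0 < e ->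
  exists Kc : R, forall z s, 0 < s ->
  `|sqnorm (eproj C (theta + s *: z) - p) - s ^+ 2 * sqnorm (PK z)| <=
     e * (s ^+ 2 * sqnorm (PK z)) + Kc /\
  `|(sqnorm (eproj C (theta + s *: z) - theta) - sqnorm (p - theta)) - s ^+ 2 * sqnorm (PK z)| <=
     e * (s ^+ 2 * sqnorm (PK z)) + Kc.
Proof.
move=> hB e0.
pose d := e / (8 * (1 + e)).
have d0 : 0 < d by rewrite /d divr_gt0 // mulr_gt0 //; lra.
have de : 8 * d <= e.
  rewrite /d; have -> : 8 * (e / (8 * (1 + e))) = e / (1 + e) by field; lra.
  rewrite ler_pdivrMr; last lra.
  nra.
have d8 : d <= 1 / 8.
  rewrite /d ler_pdivrMr; last (rewrite mulr_gt0 //; lra).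
  have -> : 1 / 8 * (8 * (1 + e)) = 1 + e :> R by field.
  lra.
have dm : d * d^-1 = 1 by rewrite mulfV // gt_eqF.
exists (2 * (`|B| + 4 * d^-1 * sqnorm (theta - p) + 4 * sqnorm (theta - p)) + d^-1 * sqnorm (theta - p)).
move=> z s s0.
have X0 : 0 <= s ^+ 2 * sqnorm (PK z) by rewrite mulr_ge0 // ?sqr_ge0 // sqnorm_ge0.
have hH : `|(sqnorm (eproj C (theta + s *: z) - theta) - sqnorm (p - theta)) -
    sqnorm (eproj C (theta + s *: z) - p)| <=
    d * sqnorm (eproj C (theta + s *: z) - p) + d^-1 * sqnorm (theta - p).
  rewrite H_rel.
  have -> : sqnorm (eproj C (theta + s *: z) - p) - 2 * dot (eproj C (theta + s *: z) - p) (theta - p) -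
     sqnorm (eproj C (theta + s *: z) - p) = - (2 * dot (eproj C (theta + s *: z) - p) (theta - p)) by ring.
  rewrite normrN; apply: le_trans (young2 _ _ d0) _.
  by rewrite (mulrC _ d^-1).
have hU : (1 - d) * (sqnorm (eproj C (theta + s *: z) - p) - B) <=
    s ^+ 2 * sqnorm (PK z) + d^-1 * sqnorm (theta - p).
  apply: bound_up => //; lra.
exact: (real_approx X0 (sqnorm_ge0 _) (sqnorm_ge0 _) d0 dm de d8 (bound_low z s0 d0) hU hH).
Qed.

End Bounds.


Section Meas.
Variables (R : realType) (n : nat).


Definition ratvec (k : nat) : 'rV[R]_n :=
  if (unpickle k : option 'rV[rat]_n) is Some q then map_mx (@ratr R) q else 0.

Lemma ratvec_dense (z : 'rV[R]_n) (e : R) : (0 < e)%R -> exists k, (nrm (z - ratvec k) <= e)%R.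
Proof.
move=> e0.
pose eta := (e / (n.+1)%:R)%R.
have eta0 : (0 < eta)%R by rewrite /eta divr_gt0 // ltr0n.
have : forall i : 'I_n, exists q : rat, ratr q \in `](z ord0 i - eta), (z ord0 i + eta)[.
  move=> i; apply: rat_in_itvoo; lra.
move=> /fin_all_exists [f hf].
exists (pickle (\row_i f i : 'rV[rat]_n)).
rewrite /ratvec pickleK; apply: nrm_leP; first exact: ltW.
have -> : sqnorm (z - map_mx (@ratr R) (\row_i f i)) = \sum_(i < n) (z ord0 i - ratr (f i)) ^+ 2.
  by apply: eq_bigr => i _; rewrite !mxE.
apply: (@le_trans _ _ (\sum_(i < n) eta ^+ 2)).
  apply: ler_sum => i _; have := hf i; rewrite in_itv /= => /andP [h1 h2].
  nra.
rewrite sumr_const card_ord /eta.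
have -> : ((e / n.+1%:R) ^+ 2 *+ n = e ^+ 2 * (n%:R / (n.+1%:R) ^+ 2))%R.
  rewrite -mulr_natr expr_div_n; field.
  by apply: lt0r_neq0; have := ler0n R n; lra.
rewrite -[leRHS]mulr1; apply: ler_wpM2l; first exact: sqr_ge0.
rewrite ler_pdivrMr ?exprn_gt0 ?ltr0n // mul1r.
rewrite -natrX ler_nat; apply: (leq_trans (leqnSn n)); by rewrite expnS expn1 leq_pmulr.
Qed.

Variables (dd : measure_display) (T : measurableType dd).

Lemma meas_sqnormB (Z : T -> 'rV[R]_n) (q : 'rV[R]_n) :
  (forall i, measurable_fun setT (fun w => Z w ord0 i)) ->
  measurable_fun setT (fun w => sqnorm (Z w - q)).
Proof.
move=> mZ.
have -> : (fun w => sqnorm (Z w - q)) = (fun w => \sum_(i < n) (Z w ord0 i - q ord0 i) ^+ 2).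
  by apply: funext => w; apply: eq_bigr => i _; rewrite !mxE.
apply: measurable_sum => i; apply: measurable_funX.
by apply: measurable_funB => //; exact: measurable_cst.
Qed.

Lemma meas_nrmB (Z : T -> 'rV[R]_n) (q : 'rV[R]_n) :
  (forall i, measurable_fun setT (fun w => Z w ord0 i)) ->
  measurable_fun setT (fun w => nrm (Z w - q)).
Proof.
move=> mZ.
have -> : (fun w => nrm (Z w - q)) = Num.sqrt \o (fun w => sqnorm (Z w - q)) by [].
apply: measurableT_comp.
  exact: continuous_measurable_fun (@sqrt_continuous R).
exact: meas_sqnormB.
Qed.

Lemma lip_measurable (Z : T -> 'rV[R]_n) (F : 'rV[R]_n -> R) (L : R) :
  (0 <= L)%R -> (forall x y, (`|F x - F y| <= L * nrm (x - y))%R) ->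
  (forall i, measurable_fun setT (fun w => Z w ord0 i)) ->
  measurable_fun setT (fun w => F (Z w)).
Proof.
move=> L0 hF mZ.
pose phi (k : nat) (w : T) : \bar R := (F (ratvec k) + L * nrm (Z w - ratvec k))%:E.
have mphi : forall k, measurable_fun setT (phi k).
  move=> k; apply/measurable_EFinP; apply: measurable_funD; first exact: measurable_cst.
  by apply: measurable_funM; [exact: measurable_cst | exact: meas_nrmB].
have eq : (EFin \o (fun w => F (Z w))) = (fun w => einfs (phi ^~ w) 0%N).
  apply: funext => w /=; rewrite /einfs /=; apply/eqP; rewrite eq_le; apply/andP; split.
  - apply: le_ereal_inf_tmp => _ [k _ <-]; rewrite /phi lee_fin.
    have := hF (Z w) (ratvec k); rewrite ler_norml => /andP [_ h]; lra.
  - apply/lee_addgt0Pr => e e0.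
    have L1 : (0 < 2 * L + 1)%R by lra.
    have [k hk] := ratvec_dense (Z w) (divr_gt0 e0 L1).
    apply: ge_ereal_inf; exists (phi k w); first by exists k.
    rewrite /phi -EFinD lee_fin.
    have := hF (ratvec k) (Z w); rewrite ler_norml => /andP [_ h].
    rewrite nrmBC in h.
    have hk2 : (L * nrm (Z w - ratvec k) <= L * (e / (2 * L + 1)))%R by apply: ler_wpM2l.
    have hk3 : (2 * L * (e / (2 * L + 1)) <= e)%R.
      rewrite mulrA ler_pdivrMr; last lra.
      nra.
    nra.
apply/measurable_EFinP; rewrite eq.
exact: measurable_fun_einfs.
Qed.

End Meas.


Section RealLim.
Variable R : realType.

Lemma real_lim (Phi : R -> R) (L : R) : 0 <= L ->
  (forall e, 0 < e -> e <= 1 -> exists K, 0 <= K /\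
     forall s, 0 < s -> `|Phi s - L| <= e * L + K / s ^+ 2) ->
  Phi @ +oo --> L.
Proof.
move=> L0 h; apply/cvgrPdist_le => eps eps0.
pose e := eps / (2 * (L + 1) + eps).
have den0 : 0 < 2 * (L + 1) + eps by lra.
have e0 : 0 < e by rewrite /e divr_gt0.
have e1 : e <= 1 by rewrite /e ler_pdivrMr // mul1r; lra.
have eL : e * L <= eps / 2.
  rewrite /e mulrAC ler_pdivrMr // -mulrA ler_pM2l //.
  rewrite mulrDr mulrDl; lra.
have [K [K0 hK]] := h e e0 e1.
near=> s.
have s1 : 2 * K / eps + 1 <= s by near: s; apply: nbhs_pinfty_ge; rewrite num_real.
have q0 : 0 <= 2 * K / eps by rewrite divr_ge0 // ?mulr_ge0 // ltW.
have sp : 0 < s by lra.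
have hs := hK s sp.
have Ks : K / s ^+ 2 <= eps / 2.
  rewrite ler_pdivrMr ?exprn_gt0 //.
  have : 2 * K <= eps * s.
    have : 2 * K / eps * eps = 2 * K by rewrite divfK // gt_eqF.
    have : (2 * K / eps + 1) * eps <= s * eps by rewrite ler_pM2r.
    nra.
  have : s <= s ^+ 2 by rewrite expr2 ler_peMl //; lra.
  nra.
rewrite distrC; lra.
Unshelve. all: by end_near.
Qed.

End RealLim.

Section IntLim.
Variables (dd : measure_display) (T : measurableType dd) (R : realType) (P : probability T R).
Local Open Scope ereal_scope.

Lemma int_affine (f : T -> R) (a b : R) : measurable_fun setT f ->
  (forall w, (0 <= f w)%R) -> (0 <= a)%R -> (0 <= b)%R ->
  \int[P]_w ((a * f w + b)%R)%:E = a%:E * \int[P]_w (f w)%:E + b%:E.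
Proof.
move=> mf f0 a0 b0.
under eq_integral => w _ do rewrite EFinD EFinM.
rewrite ge0_integralD //.
- rewrite ge0_integralZl //; last by move=> w _; rewrite lee_fin.
    rewrite integral_cst //; congr (_ + _); rewrite -[RHS]mule1; congr (_ * _); exact: probability_setT.
  by apply/measurable_EFinP.
all: try (by move=> w _; rewrite lee_fin).
all: try (by move=> w _; rewrite -EFinM lee_fin mulr_ge0).
all: try (by apply/measurable_EFinP; apply: measurable_funM => //; exact: measurable_cst).
all: try exact: measurable_cst.
Qed.

Lemma int_bounds (h : R -> T -> R) (g : T -> R) (c0 : R) :
  (forall s, (0 < s)%R -> measurable_fun setT (h s)) ->
  (forall s w, (0 <= h s w)%R) ->
  measurable_fun setT g -> (forall w, (0 <= g w)%R) ->
  \int[P]_w (g w)%:E = (fine (\int[P]_w (g w)%:E))%:E ->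
  forall e, (0 < e)%R -> (e <= 1)%R -> forall K : R,
  (forall s w, (0 < s)%R -> (`|h s w - c0 - s ^+ 2 * g w| <= e * (s ^+ 2 * g w) + K)%R) ->
  forall s, (0 < s)%R ->
  \int[P]_w (h s w)%:E = (fine (\int[P]_w (h s w)%:E))%:E /\
  (`|(s ^+ 2)^-1 * (fine (\int[P]_w (h s w)%:E) - c0) - fine (\int[P]_w (g w)%:E)| <=
    e * fine (\int[P]_w (g w)%:E) + (`|K| + `|c0| + `|c0|) / s ^+ 2)%R.
Proof.
move=> mh h0 mg g0 IgE e e0 e1 K hK s s0.
set Ig := fine (\int[P]_w (g w)%:E) in IgE *.
set K' := (`|K| + `|c0|)%R.
have K'0 : (0 <= K')%R by rewrite /K' addr_ge0.
have s2 : (0 < s ^+ 2)%R by rewrite exprn_gt0.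
have up : forall w, (h s w <= (1 + e) * s ^+ 2 * g w + K')%R.
  move=> w; have := hK s w s0; rewrite ler_norml => /andP [_ hh].
  have := ler_norm K; have := ler_norm c0; rewrite /K'; lra.
have low : forall w, ((1 - e) * s ^+ 2 * g w + 0 <= 1 * h s w + K')%R.
  move=> w; have := hK s w s0; rewrite ler_norml => /andP [hh _].
  have := ler_norm K; have := ler_norm c0; have := ler_norm (- c0); rewrite normrN /K'; lra.
have a0 : (0 <= (1 + e) * s ^+ 2)%R by rewrite mulr_ge0 //; [lra | exact: ltW].
have a1 : (0 <= (1 - e) * s ^+ 2)%R by rewrite mulr_ge0 //; [lra | exact: ltW].
have Iup : \int[P]_w (h s w)%:E <= ((1 + e) * s ^+ 2)%R%:E * \int[P]_w (g w)%:E + K'%:E.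
  rewrite -(int_affine mg g0 a0 K'0); apply: ge0_le_integral => //.
  - by move=> w _; rewrite lee_fin.
  - by apply/measurable_EFinP; exact: mh.
  - apply/measurable_EFinP; apply: measurable_funD; last exact: measurable_cst.
    by apply: measurable_funM => //; exact: measurable_cst.
  - by move=> w _; rewrite lee_fin.
have Ih0 : 0 <= \int[P]_w (h s w)%:E by apply: integral_ge0 => w _; rewrite lee_fin.
have Ihfin : \int[P]_w (h s w)%:E \is a fin_num.
  rewrite ge0_fin_numE //; apply: le_lt_trans Iup _.
  by rewrite IgE -EFinM -EFinD ltry.
have IhE : \int[P]_w (h s w)%:E = (fine (\int[P]_w (h s w)%:E))%:E by rewrite fineK.
split => //.
set Ih := fine (\int[P]_w (h s w)%:E) in IhE *.
have Ilow : ((1 - e) * s ^+ 2)%R%:E * Ig%:E + 0%:E <= 1%:E * Ih%:E + K'%:E.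
  rewrite -IgE -IhE -(int_affine mg g0 a1 (lexx 0%R)) -(int_affine (mh s s0) (h0 s) ler01 K'0).
  apply: ge0_le_integral => //.
  - by move=> w _; rewrite lee_fin addr0 mulr_ge0.
  - apply/measurable_EFinP; apply: measurable_funD; last exact: measurable_cst.
    by apply: measurable_funM => //; exact: measurable_cst.
  - apply/measurable_EFinP; apply: measurable_funD; last exact: measurable_cst.
    by apply: measurable_funM; [exact: measurable_cst | exact: mh].
  - by move=> w _; rewrite lee_fin.
rewrite IhE IgE -EFinM -EFinD lee_fin in Iup.
rewrite -!EFinM -!EFinD lee_fin in Ilow.
have Ig0 : (0 <= Ig)%R.
  rewrite /Ig fine_ge0 //; apply: integral_ge0 => w _; rewrite lee_fin.
  exact: g0.
have key : (`|Ih - c0 - s ^+ 2 * Ig| <= e * (s ^+ 2 * Ig) + (K' + `|c0|))%R.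
  have := ler_norm c0; have := ler_norm (- c0); rewrite normrN => hc1 hc2.
  rewrite ler_norml; apply/andP; split; nra.
have -> : ((s ^+ 2)^-1 * (Ih - c0) - Ig = (Ih - c0 - s ^+ 2 * Ig) / s ^+ 2)%R.
  by field; rewrite gt_eqF.
rewrite normrM normfV [`|s ^+ 2|%R]ger0_norm ?(ltW s2) //.
rewrite ler_pdivrMr //.
have -> : ((e * Ig + (`|K| + `|c0| + `|c0|) / s ^+ 2) * s ^+ 2 =
   e * (s ^+ 2 * Ig) + (K' + `|c0|))%R.
  by rewrite /K'; field; rewrite gt_eqF.
exact: key.
Qed.

Lemma int_lim (h : R -> T -> R) (g : T -> R) (c0 : R) :
  (forall s, (0 < s)%R -> measurable_fun setT (h s)) ->
  (forall s w, (0 <= h s w)%R) ->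
  measurable_fun setT g -> (forall w, (0 <= g w)%R) ->
  \int[P]_w (g w)%:E < +oo ->
  (forall e, (0 < e)%R -> exists K : R, forall s w, (0 < s)%R ->
     (`|h s w - c0 - s ^+ 2 * g w| <= e * (s ^+ 2 * g w) + K)%R) ->
  (fun s : R => (s ^- 2)%:E * (\int[P]_w (h s w)%:E - c0%:E)) @ (+oo%R : set_system R) -->
    \int[P]_w (g w)%:E.
Proof.
move=> mh h0 mg g0 gfin happ.
have Ig0 : 0 <= \int[P]_w (g w)%:E by apply: integral_ge0 => w _; rewrite lee_fin.
have IgE : \int[P]_w (g w)%:E = (fine (\int[P]_w (g w)%:E))%:E.
  by rewrite fineK // ge0_fin_numE.
have B := @int_bounds h g c0 mh h0 mg g0 IgE.
rewrite IgE; apply: cvg_EFin.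
  near=> s.
  have s0 : (0 < s)%R by near: s; apply: nbhs_pinfty_gt; rewrite num_real.
  have [K hK] := happ 1%R ltr01.
  have [hE _] := B 1%R ltr01 (lexx _) K hK s s0.
  by rewrite hE -EFinB -EFinM.
pose Phi (s : R) := ((s ^+ 2)^-1 * (fine (\int[P]_w (h s w)%:E) - c0))%R.
apply: (cvg_trans (near_eq_cvg (f := Phi) _)).
  near=> s.
  have s0 : (0 < s)%R by near: s; apply: nbhs_pinfty_gt; rewrite num_real.
  have [K hK] := happ 1%R ltr01.
  have [hE _] := B 1%R ltr01 (lexx _) K hK s s0.
  by rewrite /= hE -EFinB -EFinM /= /Phi.
apply: real_lim; first by rewrite fine_ge0.
move=> e e0 e1; have [K hK] := happ e e0.
exists (`|K| + `|c0| + `|c0|)%R; split; first by rewrite !addr_ge0.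
move=> s s0; have [_ hb] := B e e0 e1 K hK s s0.
exact: hb.
Unshelve. all: by end_near.
Qed.

End IntLim.


Unset Implicit Arguments. Set Strict Implicit.

Theorem proposition3 (R : realType) (n : nat)
  (C : set 'rV[R]_n) (theta : 'rV[R]_n)
  (d : measure_display) (T : measurableType d) (P : probability T R)
  (Z : T -> 'rV[R]_n) :
  C !=set0 -> closed C -> convex_set_rv C ->
  (forall i : 'I_n, measurable_fun setT (fun w => Z w ord0 i)) ->
  (forall i : 'I_n, (\int[P]_w (Z w ord0 i)%:E = 0)%E) ->
  (\int[P]_w (sqnorm (Z w))%:E < +oo)%E ->
  (exists B : R, forall x : 'rV[R]_n,
     sqnorm (eproj (feas_dir C (eproj C theta)) x) - sqnorm (eproj (core_cone C) x) <= B) ->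
  ((fun s : R => ((s ^- 2)%:E *
       \int[P]_w (sqnorm (eproj C (theta + s *: Z w) - eproj C theta))%:E)%E)
     @ +oo --> (\int[P]_w (sqnorm (eproj (core_cone C) (Z w)))%:E)%E)
  /\
  ((fun s : R => ((s ^- 2)%:E *
       (\int[P]_w (sqnorm (eproj C (theta + s *: Z w) - theta))%:E
        - (sqnorm (eproj C theta - theta))%:E))%E)
     @ +oo --> (\int[P]_w (sqnorm (eproj (core_cone C) (Z w)))%:E)%E).
Proof.
move=> C0 cC cvx mZ _ Zfin [B hB].
have cK : closed (core_cone C) by exact: core_closed.
have K0 : core_cone C 0 by exact: core0.
have Kc : forall t v, 0 <= t -> core_cone C v -> core_cone C (t *: v).
  by move=> t v; exact: core_scale.
have sqE : forall (f : T -> 'rV[R]_n), (fun w => sqnorm (f w)) = (fun w => nrm (f w) ^+ 2).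
  by move=> f; apply: funext => w; rewrite nrm_sq.
have mg : measurable_fun setT (fun w => sqnorm (eproj (core_cone C) (Z w))).
  rewrite (sqE (fun w => eproj (core_cone C) (Z w))).
  apply: measurable_funX.
  apply: (lip_measurable (F := fun z => nrm (eproj (core_cone C) z)) (L := 1)) => // x y.
  rewrite mul1r ler_norml (cone_lip cK K0 Kc) andbT.
  have := cone_lip cK K0 Kc y x; rewrite nrmBC; lra.
have lipC : forall (s : R) (c : 'rV[R]_n) x y,
    `|nrm (eproj C (theta + s *: x) - c) - nrm (eproj C (theta + s *: y) - c)| <= `|s| * nrm (x - y).
  move=> s c x y; apply: le_trans (nrm_lip _ _) _.
  have -> : eproj C (theta + s *: x) - c - (eproj C (theta + s *: y) - c) =
    eproj C (theta + s *: x) - eproj C (theta + s *: y).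
    by apply/rowP => i; rewrite !mxE; ring.
  rewrite -nrmZ nrm_le; apply: le_trans (eproj_nonexp _ _ cvx C0 cC) _.
  have -> : theta + s *: x - (theta + s *: y) = s *: (x - y).
    by apply/rowP => i; rewrite !mxE; ring.
  exact: lexx.
have mh : forall (c : 'rV[R]_n) (s : R), measurable_fun setT
    (fun w => sqnorm (eproj C (theta + s *: Z w) - c)).
  move=> c s; rewrite (sqE (fun w => eproj C (theta + s *: Z w) - c)).
  apply: measurable_funX.
  apply: (lip_measurable (F := fun z => nrm (eproj C (theta + s *: z) - c)) (L := `|s|)) => //.
have g0 : forall w, 0 <= sqnorm (eproj (core_cone C) (Z w)) by move=> w; exact: sqnorm_ge0.
have gfin : (\int[P]_w (sqnorm (eproj (core_cone C) (Z w)))%:E < +oo)%E.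
  apply: le_lt_trans Zfin; apply: ge0_le_integral => //.
  - by move=> w _; rewrite lee_fin.
  - exact/measurable_EFinP.
  - apply/measurable_EFinP.
    have -> : (fun w => sqnorm (Z w)) = (fun w => sqnorm (Z w - 0)).
      by apply: funext => w; rewrite subr0.
    exact: meas_sqnormB.
  - by move=> w _; rewrite lee_fin; exact: (cone_le cK K0 Kc).
split.
- have L1 := @int_lim _ _ _ P (fun s w => sqnorm (eproj C (theta + s *: Z w) - eproj C theta))
    (fun w => sqnorm (eproj (core_cone C) (Z w))) 0
    (fun s _ => mh (eproj C theta) s) (fun s w => sqnorm_ge0 _) mg g0 gfin.
  have e1 : (fun s : R => ((s ^- 2)%:E *
       (\int[P]_w (sqnorm (eproj C (theta + s *: Z w) - eproj C theta))%:E - 0%:E))%E) =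
     (fun s : R => ((s ^- 2)%:E *
       \int[P]_w (sqnorm (eproj C (theta + s *: Z w) - eproj C theta))%:E)%E).
    by apply: funext => s; rewrite sube0.
  rewrite -e1; apply: L1 => e e0.
  have [Kc' hK] := approx_all C0 cC cvx hB e0.
  exists Kc' => s w s0; have [h1 _] := hK (Z w) s s0.
  by rewrite subr0.
- have L2 := @int_lim _ _ _ P (fun s w => sqnorm (eproj C (theta + s *: Z w) - theta))
    (fun w => sqnorm (eproj (core_cone C) (Z w))) (sqnorm (eproj C theta - theta))
    (fun s _ => mh theta s) (fun s w => sqnorm_ge0 _) mg g0 gfin.
  apply: L2 => e e0.
  have [Kc' hK] := approx_all C0 cC cvx hB e0.
  exists Kc' => s w s0; have [_ h2] := hK (Z w) s s0.
  exact: h2.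
Qed.
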